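(* The category $\mathsf{BA}^\mathsf{S}$ is dually isomorphic to the category $\mathsf{BA}^\mathsf{Q}$. Explicitly, the assignments (identity on objects) sending a subordination $S\colon A\to B$ to the quasi-semi-homomorphism $\Delta_S\colon B\to\mathcal J(A)$, $\Delta_S(b)=S^{-1}[b]=\{a\in A\mid a\mathrel{S}b\}$, and sending a quasi-semi-homomorphism $\Delta\colon A\to\mathcal J(B)$ to the subordination $S_\Delta\colon B\to A$, $b\mathrel{S_\Delta}a \iff b\in\Delta(a)$, are well-defined contravariant functors that are mutually inverse.
   Context: For a boolean algebra $B$, $\mathcal J(B)$ denotes the set of ideals of $B$. A quasi-semi-homomorphism from a boolean algebra $A$ to a boolean algebra $B$ is a function $\Delta\colon A\to\mathcal J(B)$ with $\Delta(1)=B$ and $\Delta(a\wedge b)=\Delta(a)\cap\Delta(b)$ for all $a,b\in A$. $\mathsf{BA}^\mathsf{Q}$ is the category of boolean algebras and quasi-semi-homomorphisms, where the identity on $A$ is $a\mapsto{\downarrow}a$ and the composite of $\Delta_1\colon A\to\mathcal J(B)$ and $\Delta_2\colon B\to\mathcal J(C)$ is $(\Delta_2\circ\Delta_1)(a)=\bigcup\{\Delta_2(b)\mid b\in\Delta_1(a)\}$. A subordination relation from a boolean algebra $A$ to a boolean algebra $B$ is a relation $S\subseteq A\times B$ (written $a\mathrel{S}c$) such that for $a,b\in A$, $c,d\in B$: (S1) $0\mathrel{S}0$ and $1\mathrel{S}1$; (S2) $a\mathrel{S}c$ and $b\mathrel{S}c$ imply $(a\vee b)\mathrel{S}c$; (S3)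 $a\mathrel{S}c$ and $a\mathrel{S}d$ imply $a\mathrel{S}(c\wedge d)$; (S4) $a\le b$, $b\mathrel{S}c$, $c\le d$ imply $a\mathrel{S}d$. $\mathsf{BA}^\mathsf{S}$ is the category of boolean algebras and subordination relations; the identity on $A$ is the order $\le_A$ and composition is relational composition: for $S_1\colon A\to B$, $S_2\colon B\to C$, $a\mathrel{(S_2\circ S_1)}c$ iff there is $b\in B$ with $a\mathrel{S_1}b$ and $b\mathrel{S_2}c$. *)

(* Defs.v *)
(* boolean algebras are complemented distributive lattices
   with top and bottom, i.e. Order.ctbDistrLatticeType. *)
From HB Require Import structures.
From mathcomp Require Import all_boot all_order.
Set Implicit Arguments. Unset Strict Implicit. Unset Printing Implicit Defensive.
Import Order.Theory.
Local Open Scope order_scope.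

(* An ideal: contains 0, downward closed, closed under binary joins
   (improper ideal B allowed, as Delta(1) = B). *)
Definition is_ideal {d} {B : ctbDistrLatticeType d} (I : B -> Prop) : Prop :=
  [/\ I \bot,
      (forall x y : B, x <= y -> I y -> I x) &
      (forall x y : B, I x -> I y -> I (x `|` y))].

(* Quasi-semi-homomorphism A -> J(B), represented as D : A -> (B -> Prop). *)
Definition qsh {dA dB} {A : ctbDistrLatticeType dA} {B : ctbDistrLatticeType dB}
  (D : A -> B -> Prop) : Prop :=
  [/\ (forall a, is_ideal (D a)),
      (forall b : B, D \top b) &
      (forall (a a' : A) (b : B), D (a `&` a') b <-> (D a b /\ D a' b))].

Definition qid {d} (A : ctbDistrLatticeType d) : A -> A -> Prop :=
  fun a x => x <= a.

Definition qcomp {dA dB dC} {A : ctbDistrLatticeType dA}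
  {B : ctbDistrLatticeType dB} {C : ctbDistrLatticeType dC}
  (D1 : A -> B -> Prop) (D2 : B -> C -> Prop) : A -> C -> Prop :=
  fun a c => exists b, D1 a b /\ D2 b c.

Definition subordination {dA dB} {A : ctbDistrLatticeType dA}
  {B : ctbDistrLatticeType dB} (S : A -> B -> Prop) : Prop :=
  [/\ S \bot \bot /\ S \top \top,
      (forall (a b : A) (c : B), S a c -> S b c -> S (a `|` b) c),
      (forall (a : A) (c d : B), S a c -> S a d -> S a (c `&` d)) &
      (forall (a b : A) (c d : B), a <= b -> S b c -> c <= d -> S a d)].

Definition sid {d} (A : ctbDistrLatticeType d) : A -> A -> Prop :=
  fun a b => a <= b.

Definition scomp {dA dB dC} {A : ctbDistrLatticeType dA}
  {B : ctbDistrLatticeType dB} {C : ctbDistrLatticeType dC}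
  (S2 : B -> C -> Prop) (S1 : A -> B -> Prop) : A -> C -> Prop :=
  fun a c => exists b, S1 a b /\ S2 b c.

Definition Delta_of {dA dB} {A : ctbDistrLatticeType dA}
  {B : ctbDistrLatticeType dB} (S : A -> B -> Prop) : B -> A -> Prop :=
  fun b a => S a b.

Definition S_of {dA dB} {A : ctbDistrLatticeType dA}
  {B : ctbDistrLatticeType dB} (D : A -> B -> Prop) : B -> A -> Prop :=
  fun b a => D a b.

(* Equality of morphisms (extensional equality of relations / ideal-valued maps). *)
Definition releq {X Y : Type} (R1 R2 : X -> Y -> Prop) : Prop :=
  forall x y, R1 x y <-> R2 x y.

Arguments sid {d} A _ _.
Arguments qid {d} A _ _.

(* Main.v *)
Require Import Defs.
From mathcomp Require Import all_boot all_order.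
Import Order.Theory.
Local Open Scope order_scope.

Lemma qsh_mono dA dB (A : ctbDistrLatticeType dA) (B : ctbDistrLatticeType dB)
  (D : A -> B -> Prop) : qsh D -> forall (c d : A) b, c <= d -> D c b -> D d b.
Proof.
case=> _ _ Hm c d b cd Hc.
have : D (c `&` d) b by move: cd => /meet_idPl ->.
by case/Hm.
Qed.

Theorem theorem2p5 :
  (* Delta_(-) is well defined on morphisms *)
  (forall dA dB (A : ctbDistrLatticeType dA) (B : ctbDistrLatticeType dB)
     (S : A -> B -> Prop), subordination S -> qsh (Delta_of S)) /\
  (* S_(-) is well defined on morphisms *)
  (forall dA dB (A : ctbDistrLatticeType dA) (B : ctbDistrLatticeType dB)
     (D : A -> B -> Prop), qsh D -> subordination (S_of D)) /\
  (* Delta_(-) preserves identities *)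
  (forall d (A : ctbDistrLatticeType d), releq (Delta_of (sid A)) (qid A)) /\
  (* S_(-) preserves identities *)
  (forall d (A : ctbDistrLatticeType d), releq (S_of (qid A)) (sid A)) /\
  (* Delta_(-) is contravariant on composites *)
  (forall dA dB dC (A : ctbDistrLatticeType dA) (B : ctbDistrLatticeType dB)
     (C : ctbDistrLatticeType dC) (S1 : A -> B -> Prop) (S2 : B -> C -> Prop),
     subordination S1 -> subordination S2 ->
     releq (Delta_of (scomp S2 S1)) (qcomp (Delta_of S2) (Delta_of S1))) /\
  (* S_(-) is contravariant on composites *)
  (forall dA dB dC (A : ctbDistrLatticeType dA) (B : ctbDistrLatticeType dB)
     (C : ctbDistrLatticeType dC) (D1 : A -> B -> Prop) (D2 : B -> C -> Prop),
     qsh D1 -> qsh D2 ->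
     releq (S_of (qcomp D1 D2)) (scomp (S_of D1) (S_of D2))) /\
  (* mutually inverse *)
  (forall dA dB (A : ctbDistrLatticeType dA) (B : ctbDistrLatticeType dB)
     (S : A -> B -> Prop), subordination S -> releq (S_of (Delta_of S)) S) /\
  (forall dA dB (A : ctbDistrLatticeType dA) (B : ctbDistrLatticeType dB)
     (D : A -> B -> Prop), qsh D -> releq (Delta_of (S_of D)) D).
Proof.
split.
  move=> dA dB A B S [[S00 S11] S2 S3 S4]; split.
  - move=> b; split; rewrite /Delta_of.
    + exact: (S4 _ _ _ _ (le0x _) S00 (le0x _)).
    + by move=> x y xy Hy; exact: (S4 _ _ _ _ xy Hy (lexx _)).
    + by move=> x y; apply: S2.
  - by move=> a; exact: (S4 _ _ _ _ (lex1 _) S11 (lexx _)).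
  - move=> b b' a; rewrite /Delta_of; split.
    + by move=> H; split; apply: (S4 _ _ _ _ (lexx _) H); rewrite ?leIl ?leIr.
    + by case=> H1 H2; apply: S3.
split.
  move=> dA dB A B D HD; have Hmono := @qsh_mono _ _ _ _ _ HD.
  case: HD => Hid Htop Hm; split; rewrite /S_of.
  - by split; [case: (Hid \bot) | apply: Htop].
  - by move=> a b c Ha Hb; case: (Hid c) => _ _; apply.
  - by move=> a c d Hc Hd; apply/Hm.
  - move=> a b c d ab Hb cd; apply: (Hmono c) => //.
    by case: (Hid c) => _ H _; apply: H ab Hb.
split; first by [].
split; first by [].
split.
  move=> dA dB dC A B C S1 S2 _ _ a c; rewrite /Delta_of /scomp /qcomp.
  by split; case=> b [H1 H2]; exists b.
split.
  move=> dA dB dC A B C D1 D2 _ _ a c; rewrite /S_of /scomp /qcomp.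
  by split; case=> b [H1 H2]; exists b.
by split.
Qed.
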